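(* Every strictly convex reflexive ordered Banach space $X$ with a closed proper generating cone is a $\upsilon$-quasi-lattice.
   Context: An ordered Banach space is a real Banach space $X$ with a cone $X_+$ ($X_++X_+\subseteq X_+$, $\lambda X_+\subseteq X_+$ for $\lambda\ge0$) that is proper ($X_+\cap(-X_+)=\{0\}$); $x\le y$ means $y-x\in X_+$; the cone is generating if $X=X_+-X_+$. $X$ is strictly convex if $\|x+y\|=\|x\|+\|y\|$ implies one of $x,y$ is a non-negative multiple of the other. For $A\subseteq X$, $\upsilon(A)$ is the set of upper bounds of $A$. Let $\sigma_{x,y}(z)=\|z-x\|+\|z-y\|$. A pre-ordered Banach space with closed cone is a $\upsilon$-quasi-lattice if for every $x,y$ the set $\upsilon(\{x,y\})$ is non-empty and there exists a unique element of $\upsilon(\{x,y\})$ minimizing $\sigma_{x,y}$ on $\upsilon(\{x,y\})$. *)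

(* Defs.v *)
From HB Require Import structures.
From mathcomp Require Import all_boot all_order all_algebra.
From mathcomp Require Import all_classical all_reals.
From mathcomp Require Import topology normedtype.
Set Implicit Arguments. Unset Strict Implicit. Unset Printing Implicit Defensive.
Import Order.TTheory GRing.Theory Num.Theory.
Import numFieldNormedType.Exports.
Local Open Scope classical_set_scope.
Local Open Scope ring_scope.

Section Defs.
Context {R : realType} {V : normedModType R}.

Definition is_cone (C : set V) : Prop :=
  (forall x y, C x -> C y -> C (x + y)) /\
  (forall (l : R) x, 0 <= l -> C x -> C (l *: x)).

Definition proper_cone (C : set V) : Prop :=
  forall x, C x -> C (- x) -> x = 0.

Definition generating_cone (C : set V) : Prop :=
  forall x, exists a b, C a /\ C b /\ x = a - b.

Definition cone_le (C : set V) (x y : V) : Prop := C (y - x).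

Definition upper_bounds (C : set V) (A : set V) : set V :=
  [set z | forall a, A a -> cone_le C a z].

Definition sigma_xy (x y z : V) : R := `|z - x| + `|z - y|.

Definition upsilon_quasi_lattice (C : set V) : Prop :=
  forall x y : V,
    upper_bounds C [set x; y] !=set0 /\
    exists! z, upper_bounds C [set x; y] z /\
      (forall w, upper_bounds C [set x; y] w -> sigma_xy x y z <= sigma_xy x y w).

Definition strictly_convex : Prop :=
  forall x y : V, `|x + y| = `|x| + `|y| ->
    (exists l : R, 0 <= l /\ x = l *: y) \/ (exists l : R, 0 <= l /\ y = l *: x).

Definition dual_elt (f : V -> R) : Prop :=
  (forall x y, f (x + y) = f x + f y) /\
  (forall (a : R) x, f (a *: x) = a * f x) /\
  continuous f.

Definition dual_normbound (f : V -> R) (M : R) : Prop :=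
  forall x, `|f x| <= M * `|x|.

(** reflexivity: every continuous linear functional on the dual X* (with the
    operator norm) is evaluation at some point of X, i.e. the canonical
    embedding X -> X** is surjective *)
Definition reflexive_space : Prop :=
  forall Phi : (V -> R) -> R,
    (forall f g, dual_elt f -> dual_elt g ->
       Phi (fun x => f x + g x) = Phi f + Phi g) ->
    (forall (a : R) f, dual_elt f -> Phi (fun x => a * f x) = a * Phi f) ->
    (exists c : R, forall f (M : R), dual_elt f -> 0 <= M ->
       dual_normbound f M -> `|Phi f| <= c * M) ->
    exists x : V, forall f, dual_elt f -> Phi f = f x.

End Defs.

(* Main.v *)
Require Import Defs.
From HB Require Import structures.
From mathcomp Require Import all_boot all_order all_algebra.
From mathcomp Require Import all_classical all_reals.
From mathcomp Require Import topology normedtype.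
From mathcomp Require Import ring lra.
Import Order.TTheory GRing.Theory Num.Theory.
Import numFieldNormedType.Exports.
Local Open Scope classical_set_scope.
Local Open Scope ring_scope.


Section HBsec.
Context {R : realType} {V : normedModType R}.

Definition sublin (p : V -> R) :=
  (forall x y, p (x + y) <= p x + p y) /\
  (forall (l : R) x, 0 <= l -> p (l *: x) = l * p x).

Definition goodG (p : V -> R) (w : V) (G : set (V * R)) :=
  [/\ (forall v r s, G (v, r) -> G (v, s) -> r = s),
      (forall v r u s, G (v, r) -> G (u, s) -> G (v + u, r + s)),
      (forall (l : R) v r, G (v, r) -> G (l *: v, l * r)),
      (forall v r, G (v, r) -> r <= p v) &
      (forall v r, G (v, r) -> G (w, p w))].

Lemma chain_good p w (F : set (set (V * R))) :
  F `<=` goodG p w -> total_on F subset -> goodG p w (\bigcup_(X in F) X).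
Proof.
move=> FG tot.
have two : forall q1 q2, (\bigcup_(X in F) X) q1 -> (\bigcup_(X in F) X) q2 ->
   exists2 X, F X & X q1 /\ X q2.
  move=> q1 q2 [X1 FX1 X1q] [X2 FX2 X2q].
  case: (tot _ _ FX1 FX2) => [S12|S21].
    by exists X2 => //; split => //; apply: S12.
  by exists X1 => //; split => //; apply: S21.
split.
- move=> v r s H1 H2; have [X FX [Xr Xs]] := two _ _ H1 H2.
  by have [fX _ _ _ _] := FG X FX; exact: fX Xr Xs.
- move=> v r u s H1 H2; have [X FX [Xr Xs]] := two _ _ H1 H2.
  by have [_ aX _ _ _] := FG X FX; exists X => //; exact: aX Xr Xs.
- move=> l v r [X FX Xr].
  by have [_ _ sX _ _] := FG X FX; exists X => //; exact: sX.
- move=> v r [X FX Xr].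
  by have [_ _ _ dX _] := FG X FX; exact: dX.
- move=> v r [X FX Xr].
  by have [_ _ _ _ wX] := FG X FX; exists X => //; exact: wX Xr.
Qed.

Lemma sublin0 p : sublin p -> p 0 = 0.
Proof. by move=> [_ hp]; rewrite -(scale0r 0) hp // mul0r. Qed.

Lemma sublinN p x : sublin p -> 0 <= p x + p (- x).
Proof.
move=> sp; have := sp.1 x (- x); rewrite subrr sublin0 //.
Qed.

Lemma extend_good p w (A : set (V * R)) v0 r0 v :
  sublin p -> goodG p w A -> A (v0, r0) -> (forall r, ~ A (v, r)) ->
  exists B, A `<` B /\ goodG p w B.
Proof.
move=> [pD pZ] [fA aA sA dA wA] Av0 nAv.
have Aw := wA _ _ Av0.
have A00 : A (0, 0) by have := sA 0 _ _ Aw; rewrite scale0r mul0r.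
have AN : forall u s, A (u, s) -> A (- u, - s).
  by move=> u s Aus; have := sA (-1) _ _ Aus; rewrite scaleN1r mulN1r.
have key : forall u s u' s', A (u, s) -> A (u', s') ->
    s - p (u - v) <= p (u' + v) - s'.
  move=> u s u' s' A1 A2; have := dA _ _ (aA _ _ _ _ A1 A2).
  have -> : u + u' = (u - v) + (u' + v) by rewrite addrACA addNr addr0.
  move=> h; have := pD (u - v) (u' + v); lra.
pose L := [set y | exists u s, A (u, s) /\ y = s - p (u - v)].
have L0 : L !=set0 by exists (0 - p (0 - v)), 0, 0.
have Lub : ubound L (p (0 + v) - 0).
  by move=> y [u [s [Aus ->]]]; exact: key.
have hsL : has_sup L by split => //; exists (p (0 + v) - 0).
pose a := sup L.
have aL : forall u s, A (u, s) -> s - p (u - v) <= a.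
  by move=> u s Aus; apply: sup_upper_bound => //; exists u, s.
have aR : forall u s, A (u, s) -> a <= p (u + v) - s.
  move=> u s Aus; apply: ge_sup => // y [u' [s' [Au's' ->]]]; exact: key.
pose B := [set q | exists u s (t : R), A (u, s) /\ q = (u + t *: v, s + t * a)].
have AB : A `<=` B.
  by move=> [u s] Aus; exists u, s, 0; rewrite scale0r mul0r !addr0.
exists B; split.
  split => // BA.
  have : B (v, a) by exists 0, 0, 1; rewrite scale1r mul1r !add0r.
  by move/BA/nAv.
split.
- move=> x r s [u1 [s1 [t1 [A1 [-> ->]]]]] [u2 [s2 [t2 [A2 [E ->]]]]].
  have [t12|t12] := eqVneq t1 t2.
    subst t2; have Eu : u1 = u2 by apply: (addIr (t1 *: v)).
    by subst u2; rewrite (fA _ _ _ A1 A2).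
  exfalso; apply: (nAv ((t2 - t1)^-1 * (s1 - s2))).
  have Ad := aA _ _ _ _ A1 (AN _ _ A2).
  have := sA (t2 - t1)^-1 _ _ Ad.
  have -> : (t2 - t1)^-1 *: (u1 + - u2) = v; last by [].
  have -> : u1 + - u2 = (t2 - t1) *: v.
    have -> : u1 = u2 + t2 *: v - t1 *: v by rewrite -E addrK.
    by rewrite scalerBl addrAC (addrC u2) addrK.
  by rewrite scalerA mulVf ?scale1r // subr_eq0 eq_sym.
- move=> x r y s [u1 [s1 [t1 [A1 [-> ->]]]]] [u2 [s2 [t2 [A2 [-> ->]]]]].
  exists (u1 + u2), (s1 + s2), (t1 + t2); split; first exact: aA.
  by rewrite scalerDl mulrDl; congr pair; rewrite addrACA.
- move=> l x r [u1 [s1 [t1 [A1 [-> ->]]]]].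
  exists (l *: u1), (l * s1), (l * t1); split; first exact: sA.
  by rewrite scalerDr scalerA mulrDr mulrA.
- move=> x r [u [s [t [Aus [-> ->]]]]].
  have [t0|tneq0] := eqVneq t 0.
    by rewrite t0 scale0r mul0r !addr0; exact: dA Aus.
  have [tpos|tneg] := ltP 0 t.
    have A' := sA t^-1 _ _ Aus.
    have h := aR _ _ A'.
    have -> : u + t *: v = t *: (t^-1 *: u + v).
      by rewrite scalerDr scalerA mulfV ?scale1r.
    rewrite pZ; last exact: ltW.
    have : t * a <= t * (p (t^-1 *: u + v) - t^-1 * s) by rewrite ler_pM2l.
    rewrite mulrBr mulrA mulfV // mul1r; lra.
  have tlt : 0 < - t by rewrite oppr_gt0 lt_neqAle tneq0.
  have A' := sA (- t)^-1 _ _ Aus.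
  have h := aL _ _ A'.
  have -> : u + t *: v = (- t) *: ((- t)^-1 *: u - v).
    by rewrite scalerBr scalerA mulfV ?scale1r ?scaleNr ?opprK // gt_eqF.
  rewrite pZ; last exact: ltW.
  have : (- t) * ((- t)^-1 * s - p ((- t)^-1 *: u - v)) <= (- t) * a.
    by rewrite ler_pM2l.
  rewrite mulrBr mulrA mulfV ?gt_eqF // mul1r; lra.
- move=> x r _; apply: AB; exact: Aw.
Qed.

Lemma hahn_banach (p : V -> R) (w : V) : sublin p ->
  exists f : V -> R, (forall x y, f (x + y) = f x + f y) /\
    (forall (a : R) x, f (a *: x) = a * f x) /\
    (forall x, f x <= p x) /\ f w = p w.
Proof.
move=> sp; have [pD pZ] := sp.
pose G0 := [set q | exists t : R, q = (t *: w, t * p w)].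
have gG0 : goodG p w G0.
  split.
  - move=> v r s [t1 [-> ->]] [t2 [E ->]].
    have [w0|wn0] := eqVneq w 0.
      by rewrite w0 sublin0 // !mulr0.
    have : (t1 - t2) *: w = 0 by rewrite scalerBl E subrr.
    move/eqP; rewrite scaler_eq0 (negbTE wn0) orbF subr_eq0 => /eqP -> //.
  - move=> v r u s [t1 [-> ->]] [t2 [-> ->]]; exists (t1 + t2).
    by rewrite scalerDl mulrDl.
  - move=> l v r [t [-> ->]]; exists (l * t); by rewrite scalerA mulrA.
  - move=> v r [t [-> ->]].
    have [t0|t0] := leP 0 t; first by rewrite pZ.
    have -> : t *: w = (- t) *: (- w) by rewrite scaleNr scalerN opprK.
    rewrite pZ; last by rewrite oppr_ge0 ltW.
    have := @sublinN p w sp; nra.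
  - by move=> v r _; exists 1; rewrite scale1r mul1r.
have [A [gA Amax]] := @Zorn_bigcup (V * R)%type (goodG p w)
  (fun F FG tot => @chain_good p w F FG tot).
have [fA aA sA dA wA] := gA.
have [[[v0 r0] Aq]|A0] := pselect (A !=set0); last first.
  exfalso; apply: (Amax G0) => //; split.
    by move=> q Aq; exfalso; apply: A0; exists q.
  move=> G0A; apply: A0; exists (w, p w); apply: G0A; exists 1.
  by rewrite scale1r mul1r.
have tot : forall v, exists r, A (v, r).
  move=> v; case: (pselect (exists r, A (v, r))) => // nex; exfalso.
  have nA : forall r, ~ A (v, r) by move=> r Ar; apply: nex; exists r.
  have [B [AB gB]] := @extend_good p w A v0 r0 v sp gA Aq nA.
  exact: Amax AB gB.
pose f := fun v => xget 0 (fun r => A (v, r)).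
have fv : forall v, A (v, f v) by move=> v; exact: (xgetPex 0 (tot v)).
exists f; split; [|split; [|split]].
- by move=> x y; apply: (fA _ _ _ (fv (x + y))); exact: aA.
- by move=> a x; apply: (fA _ _ _ (fv (a *: x))); exact: sA.
- by move=> x; exact: dA.
- by apply: (fA _ _ _ (fv w)); exact: wA Aq.
Qed.

End HBsec.


Section Weak.
Context {R : realType} {V : normedModType R}.

Lemma cont_bounded (f : V -> R) : dual_elt f ->
  exists M : R, 0 <= M /\ forall x, `|f x| <= M * `|x|.
Proof.
move=> [fD [fZ fc]].
have f0 : f 0 = 0 by rewrite -(scale0r 0) fZ mul0r.
have := fc 0; move/cvgrPdist_lt => /(_ 1 ltr01); rewrite f0 => /nbhs_norm0P [e /= e0 he].
exists (2 / e); split; first by rewrite divr_ge0 // ltW.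
move=> x; have [->|xn0] := eqVneq x 0; first by rewrite f0 normr0 normr0 mulr0.
have nx : 0 < `|x| by rewrite normr_gt0.
pose c := e / (2 * `|x|).
have c0 : 0 < c by rewrite divr_gt0 // mulr_gt0.
have cinv : c * (2 / e * `|x|) = 1.
  rewrite /c; field; rewrite ?gt_eqF //.
have hy : `|c *: x| < e.
  rewrite normrZ ger0_norm ?ltW //.
  have -> : c * `|x| = e / 2 by rewrite /c; field; rewrite gt_eqF.
  lra.
have h := he _ hy.
rewrite fZ sub0r normrN normrM (ger0_norm (ltW c0)) in h.
apply: ltW; nra.
Qed.

Lemma ultra_bounded_cvg (U : set_system nat) (u : nat -> R) (K : R) :
  UltraFilter U -> (forall n, `|u n| <= K) -> exists l : R, u @ U --> l.
Proof.
move=> UU uK.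
have PU : ProperFilter U by exact: ultra_proper.
have FK : (u @ U) `[- K, K]%classic.
  suff : U (u @^-1` `[- K, K]%classic) by [].
  apply: filterE => n /=; rewrite in_itv /= -ler_norml; exact: uK.
have [p [_ clp]] := segment_compact (fmap_proper_filter u PU) FK.
exists p => B Bp.
case: (in_ultra_setVsetC (u @^-1` B) UU) => // hC.
have [x [nBx Bx]] := clp (~` B) B hC Bp.
by exfalso; apply: nBx.
Qed.

Lemma ulim_le (U : set_system nat) (u : nat -> R) (l c : R) :
  ProperFilter U -> u @ U --> l -> (\forall n \near U, u n <= c) -> l <= c.
Proof.
move=> PU ul uc.
have := closed_cvg [set y | y <= c] (@closed_le _ c) uc l ul. by move=> /(_ PU).
Qed.

Lemma ulim_ge (U : set_system nat) (u : nat -> R) (l c : R) :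
  ProperFilter U -> u @ U --> l -> (\forall n \near U, c <= u n) -> c <= l.
Proof.
move=> PU ul uc.
have := closed_cvg [set y | c <= y] (@closed_ge _ c) uc l ul. by move=> /(_ PU).
Qed.


Lemma weak_cluster (z : nat -> V) (K : R) :
  reflexive_space (V := V) -> (forall n, `|z n| <= K) ->
  exists U : set_system nat, UltraFilter U /\ \oo `<=` U /\
    exists z0 : V, forall f, dual_elt f -> (fun n => f (z n)) @ U --> f z0.
Proof.
move=> refl zK.
have [U [UU sU]] := ultraFilterLemma eventually_filter.
have PU : ProperFilter U by exact: ultra_proper.
have K0 : 0 <= K by apply: le_trans (zK 0%N).
have cv : forall f, dual_elt f -> exists l : R, (fun n => f (z n)) @ U --> l.
  move=> f df; have [M [M0 hM]] := @cont_bounded f df.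
  apply: (@ultra_bounded_cvg U _ (M * K)) => // n.
  by apply: le_trans (hM _) _; exact: ler_wpM2l.
pose Phi := fun f : V -> R => lim ((fun n => f (z n)) @ U).
have Phic : forall f, dual_elt f -> (fun n => f (z n)) @ U --> Phi f.
  move=> f df; have [l fl] := cv f df.
  by rewrite /Phi (cvg_lim _ fl).
have [z0 hz0] : exists z0 : V, forall f, dual_elt f -> Phi f = f z0.
  apply: refl.
  - move=> f g df dg; apply: cvg_lim => //.
    exact: cvgD (Phic f df) (Phic g dg).
  - move=> a f df; apply: cvg_lim => //.
    exact: cvgMl_tmp (Phic f df).
  - exists K => f M df M0 bM.
    have hb : forall n, `|f (z n)| <= K * M.
      move=> n; apply: le_trans (bM _) _; rewrite mulrC; exact: ler_wpM2r.
    rewrite ler_norml; apply/andP; split.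
      apply: (@ulim_ge U (fun n => f (z n)) _ _ PU (Phic f df)); apply: filterE => n.
      by have := hb n; rewrite ler_norml => /andP[].
    apply: (@ulim_le U (fun n => f (z n)) _ _ PU (Phic f df)); apply: filterE => n.
    by have := hb n; rewrite ler_norml => /andP[].
exists U; split => //; split => //; exists z0 => f df.
by rewrite -hz0 //; exact: Phic.
Qed.


Lemma lip_dual (f : V -> R) :
  (forall x y, f (x + y) = f x + f y) -> (forall (a : R) x, f (a *: x) = a * f x) ->
  (forall x, f x <= `|x|) -> dual_elt f /\ forall x, `|f x| <= `|x|.
Proof.
move=> fD fZ fle.
have fN : forall x, f (- x) = - f x by move=> x; rewrite -scaleN1r fZ mulN1r.
have fb : forall x, `|f x| <= `|x|.
  move=> x; rewrite ler_norml fle andbT -(normrN x) lerNl -fN; exact: fle.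
split => //; split => //; split => // x.
apply/cvgrPdist_lt => e e0; apply/nbhs_normP; exists e => // y /= hy.
have -> : f x - f y = f (x - y) by rewrite fD fN.
exact: le_lt_trans (fb _) hy.
Qed.

Lemma norming (w : V) : exists f : V -> R, dual_elt f /\
  (forall x, `|f x| <= `|x|) /\ f w = `|w|.
Proof.
have sp : sublin (fun x : V => `|x|).
  split; first exact: ler_normD.
  by move=> l x l0; rewrite normrZ ger0_norm.
have [f [fD [fZ [fle fw]]]] := hahn_banach _ w sp.
have [df fb] := lip_dual _ fD fZ fle.
by exists f.
Qed.


Lemma separating (C : set V) (w : V) :
  is_cone C -> closed C -> C 0 -> ~ C w ->
  exists f : V -> R, dual_elt f /\ (forall c, C c -> 0 <= f c) /\ f w < 0.
Proof.
move=> [CD CZ] cC C0 nCw.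
pose S := fun v : V => [set y : R | exists c, C c /\ y = `|v + c|].
pose p := fun v => inf (S v).
have S0 : forall v, S v !=set0 by move=> v; exists `|v + 0|, 0.
have Slb : forall v, has_lbound (S v).
  by move=> v; exists 0 => y [c [_ ->]].
have pl : forall v c, C c -> p v <= `|v + c|.
  by move=> v c Cc; apply: ge_inf => //; exists c.
have pg : forall v r, (forall c, C c -> r <= `|v + c|) -> r <= p v.
  by move=> v r h; apply: lb_le_inf => // y [c [Cc ->]]; exact: h.
have p0 : forall v, 0 <= p v by move=> v; apply: (pg) => c _.
have pn : forall v, p v <= `|v| by move=> v; have := pl v 0 C0; rewrite addr0.
have sp : sublin p.
  split.
    move=> x y.
    suff : p (x + y) - p y <= p x by lra.
    apply: (pg) => c1 Cc1.
    suff : p (x + y) - `|x + c1| <= p y by lra.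
    apply: (pg) => c2 Cc2.
    have := pl (x + y) (c1 + c2) (CD _ _ Cc1 Cc2).
    have -> : x + y + (c1 + c2) = (x + c1) + (y + c2) by rewrite addrACA.
    have := ler_normD (x + c1) (y + c2); lra.
  move=> l x; rewrite le_eqVlt => /orP[/eqP <-|l0].
    rewrite scale0r mul0r; apply/eqP; rewrite eq_le p0 andbT.
    by have := pn 0; rewrite normr0.
  apply/eqP; rewrite eq_le; apply/andP; split.
    rewrite -ler_pdivrMl //; apply: (pg) => c Cc.
    rewrite ler_pdivrMl //.
    have := pl (l *: x) (l *: c) (CZ _ _ (ltW l0) Cc).
    by rewrite -scalerDr normrZ gtr0_norm.
  apply: (pg) => c Cc.
  have := pl x (l^-1 *: c) (CZ _ _ _ Cc); rewrite invr_ge0 ltW // => /(_ isT) h.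
  have -> : l *: x + c = l *: (x + l^-1 *: c).
    by rewrite scalerDr scalerA mulfV ?gt_eqF // scale1r.
  by rewrite normrZ gtr0_norm // ler_pM2l.
have [e e0 he] : exists2 e : R, 0 < e & forall c, C c -> e <= `|w - c|.
  have : nbhs w (~` C) by have := closed_openC cC; rewrite openE => /(_ w nCw).
  move/nbhs_normP => [e /= e0 he]; exists e => // c Cc.
  rewrite leNgt; apply/negP => hc; exact: (he c hc Cc).
have pw : 0 < p (- w).
  apply: lt_le_trans e0 _; apply: (pg) => c Cc.
  by rewrite addrC -opprB normrN; exact: he.
have [f [fD [fZ [fle fw]]]] := hahn_banach _ (- w) sp.
have fle' : forall x, f x <= `|x| by move=> x; exact: le_trans (fle x) (pn x).
have [df fb] := lip_dual _ fD fZ fle'.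
have fN : forall x, f (- x) = - f x by move=> x; rewrite -scaleN1r fZ mulN1r.
exists f; split => //; split.
  move=> c Cc; have := fle (- c); have := pl (- c) c Cc.
  rewrite addNr normr0 fN; lra.
by move: fw pw; rewrite fN; lra.
Qed.

End Weak.


Lemma par_C (R : realType) (V : normedModType R) (C : set V) (a1 a2 : V) :
  is_cone C -> C a1 -> C a2 ->
  (exists l : R, 0 <= l /\ a1 = l *: a2) \/ (exists l : R, 0 <= l /\ a2 = l *: a1) ->
  `|a2| <= `|a1| -> C (a1 - a2).
Proof.
move=> [CD CZ] C1 C2 [[l [l0 E]]|[l [l0 E]]] hn.
- have [a20|a2n0] := eqVneq a2 0.
    by move: E; rewrite a20 scaler0 => ->; rewrite subr0 -a20.
  have na : 0 < `|a2| by rewrite normr_gt0.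
  move: hn; rewrite E normrZ ger0_norm // => hn.
  have l1 : 1 <= l by rewrite -(ler_pM2r na) mul1r.
  have -> : l *: a2 - a2 = (l - 1) *: a2 by rewrite scalerBl scale1r.
  by apply: CZ => //; rewrite subr_ge0.
- have [a10|a1n0] := eqVneq a1 0.
    by move: E; rewrite a10 scaler0 => ->; rewrite subr0 -a10.
  have na : 0 < `|a1| by rewrite normr_gt0.
  move: hn; rewrite E normrZ ger0_norm // => hn.
  have l1 : l <= 1 by rewrite -(ler_pM2r na) mul1r.
  have -> : a1 - l *: a1 = (1 - l) *: a1 by rewrite scalerBl scale1r.
  by apply: CZ => //; rewrite subr_ge0.
Qed.

Lemma ubP (R : realType) (V : normedModType R) (C : set V) (x y z : V) :
  upper_bounds C [set x; y] z <-> C (z - x) /\ C (z - y).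
Proof.
split.
  by move=> h; split; apply: h; [left|right].
by move=> [h1 h2] a [->|->].
Qed.

Theorem theorem6p1 (R : realType) (X : completeNormedModType R) (C : set X) :
  strictly_convex (V := X) -> reflexive_space (V := X) ->
  is_cone C -> closed C -> proper_cone C -> generating_cone C ->
  upsilon_quasi_lattice C.
Proof.
move=> sc refl cone cC prC gC x y.
have [CD CZ] := cone.
have C0 : C 0.
  by have [a [b [Ca _]]] := gC 0; have := CZ 0 a (lexx _) Ca; rewrite scale0r.
set Ub := upper_bounds C [set x; y].
have Ub0 : Ub !=set0.
  have [a [b [Ca [Cb E]]]] := gC (x - y).
  exists (x + b); apply/ubP; split.
    by rewrite addrAC subrr add0r.
  by rewrite addrAC E subrK.
split => //.
pose sg := sigma_xy x y.
have sg0 : forall z, 0 <= sg z by move=> z; rewrite /sg /sigma_xy addr_ge0.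
pose S := [set s | exists z, Ub z /\ s = sg z].
have S0 : S !=set0 by have [z Uz] := Ub0; exists (sg z), z.
have Slb : has_lbound S by exists 0 => s [z [_ ->]].
pose m := inf S.
have mle : forall z, Ub z -> m <= sg z by move=> z Uz; apply: ge_inf => //; exists z.
have m0 : 0 <= m by apply: lb_le_inf => // s [z [_ ->]].
have seq : forall n : nat, exists z, Ub z /\ sg z < m + (n.+1%:R)^-1.
  move=> n; have : inf S < m + (n.+1%:R)^-1 by rewrite ltrDl invr_gt0.
  by move/(inf_lt S0) => [s [z [Uz ->]] hs]; exists z.
have [zs hzs] := choice seq.
have zb : forall n, `|zs n| <= `|x| + (m + 1).
  move=> n; have [_ h] := hzs n.
  have h1 : (n.+1%:R : R)^-1 <= 1 by rewrite invf_le1 // ler1n.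
  have := ler_normD x (zs n - x); rewrite [x + _]addrC subrK.
  have : `|zs n - x| <= sg (zs n) by rewrite /sg /sigma_xy lerDl.
  move=> h2 h3; apply: le_trans h3 _; rewrite lerD2l; apply: le_trans h2 _.
  by apply: ltW; apply: lt_le_trans h _; rewrite lerD2l.
have [U [UU [sU [z0 hz0]]]] := weak_cluster _ _ refl zb.
have PU : ProperFilter U by exact: ultra_proper.
have linB : forall f : X -> R, dual_elt f -> forall u v, f (u - v) = f u - f v.
  move=> f [fD [fZ _]] u v; rewrite fD; congr (_ + _).
  by rewrite -scaleN1r fZ mulN1r.
have inC : forall a, (forall n, C (zs n - a)) -> C (z0 - a).
  move=> a ha; case: (pselect (C (z0 - a))) => // nC; exfalso.
  have [f [df [fpos fneg]]] := separating _ _ cone cC C0 nC.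
  have : f a <= f z0.
    apply: (@ulim_ge _ U (fun n => f (zs n)) _ _ PU (hz0 f df)).
    apply: filterE => n; have := fpos _ (ha n); rewrite linB //; lra.
  move: fneg; rewrite linB //; lra.
have Uz0 : Ub z0.
  by apply/ubP; split; apply: inC => n; have [/ubP [h1 h2] _] := hzs n.
have sgle : sg z0 <= m.
  have [f [df [fb fw]]] := norming (z0 - x).
  have [g [dg [gb gw]]] := norming (z0 - y).
  apply/ler_addgt0Pr => e e0.
  pose u := fun n => (f (zs n) - f x) + (g (zs n) - g y).
  have uc : u @ U --> sg z0.
    have -> : sg z0 = (f z0 - f x) + (g z0 - g y).
      by rewrite /sg /sigma_xy -(linB f df) -(linB g dg) fw gw.
    apply: cvgD; apply: cvgB; first exact: hz0.
    - exact: cvg_cst.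
    - exact: hz0.
    - exact: cvg_cst.
  apply: (@ulim_le _ U u _ _ PU uc); apply: sU.
  exists (Num.Def.truncn e^-1) => // n /= hn.
  have [_ hs] := hzs n.
  have hinv : n.+1%:R^-1 <= e.
    have h1 : e^-1 < n.+1%:R.
      apply: lt_le_trans (truncnS_gt e^-1) _; by rewrite ler_nat ltnS.
    move: h1; rewrite -[e^-1]mul1r ltr_pdivrMr // => h2.
    by rewrite -[_^-1]mul1r ler_pdivrMr ?ltr0Sn // mulrC ltW.
  have hu : u n <= sg (zs n).
    rewrite /u -!linB // /sg /sigma_xy; apply: lerD.
      exact: le_trans (ler_norm _) (fb _).
    exact: le_trans (ler_norm _) (gb _).
  apply: le_trans hu _; apply: ltW; apply: lt_le_trans hs _; by rewrite lerD2l.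
exists z0; split.
  by split => // w Uw; exact: le_trans sgle (mle _ Uw).
move=> z' [Uz' hz'].
have e1 : sg z0 <= sg z' := le_trans sgle (mle _ Uz').
have e2 : sg z' <= sg z0 := hz' z0 Uz0.
have midE : forall v, 2^-1 *: (z0 + z') - v = 2^-1 *: ((z0 - v) + (z' - v)).
  move=> v; rewrite addrACA -opprD scalerBr; congr (_ - _); apply/esym.
  rewrite scalerDr -scalerDl.
  have -> : (2^-1 + 2^-1 : R) = 1 by field.
  by rewrite scale1r.
have h20 : (0 : R) <= 2^-1 by rewrite invr_ge0.
have [Cz0x Cz0y] := (iffLR (@ubP R X C x y z0)) Uz0.
have [Cz'x Cz'y] := (iffLR (@ubP R X C x y z')) Uz'.
have Umid : Ub (2^-1 *: (z0 + z')).
  by apply/ubP; split; rewrite midE; apply: CZ => //; apply: CD.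
have e3 : sg z0 <= sg (2^-1 *: (z0 + z')) := le_trans sgle (mle _ Umid).
move: e1 e2 e3; rewrite /sg /sigma_xy !midE !normrZ (ger0_norm h20) => e1 e2 e3.
have t1 := ler_normD (z0 - x) (z' - x).
have t2 := ler_normD (z0 - y) (z' - y).
have eqa : `|z0 - x + (z' - x)| = `|z0 - x| + `|z' - x| by lra.
have eqb : `|z0 - y + (z' - y)| = `|z0 - y| + `|z' - y| by lra.
have pa := sc _ _ eqa.
have pb := sc _ _ eqb.
have dG : forall a b v : X, (a - v) - (b - v) = a - b.
  by move=> a b v; rewrite opprB addrA subrK.
have dE : forall v, (z0 - v) - (z' - v) = z0 - z' by move=> v; exact: dG.
have dE' : forall v, (z' - v) - (z0 - v) = z' - z0 by move=> v; exact: dG.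
have swap : forall a b : X,
    (exists l : R, 0 <= l /\ a = l *: b) \/ (exists l : R, 0 <= l /\ b = l *: a) ->
    (exists l : R, 0 <= l /\ b = l *: a) \/ (exists l : R, 0 <= l /\ a = l *: b).
  by move=> a b [h|h]; [right|left].
apply/eqP; rewrite -subr_eq0; apply/eqP; apply: prC.
  case: (leP `|z' - x| `|z0 - x|) => h.
    by rewrite -(dE x); apply: par_C.
  rewrite -(dE y); apply: par_C => //; lra.
case: (leP `|z' - x| `|z0 - x|) => h.
  rewrite opprB -(dE' y); apply: par_C => //; first exact: swap.
  lra.
rewrite opprB -(dE' x); apply: par_C => //; first exact: swap.
exact: ltW.
Qed.
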